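(* Let $\alpha_1,\dots,\alpha_m\in B_k$ and let $I=\langle\alpha_1,\dots,\alpha_m\rangle$ be the ideal of $B_k$ they generate. Then \[ I=\left\langle\sum_{A\subseteq\{1,\dots,m\},\,A\neq\emptyset}(-1)^{|A|+1}\Big(\prod_{j\in A}\alpha_j\Big)^{p^r-1}\right\rangle . \] In particular, every ideal of $B_k$ is principal.
   Context: Let $p$ be a prime, $r\ge 1$ an integer, and $\mathbb{F}_{p^r}$ the finite field with $p^r$ elements. For an integer $k\ge 1$, $B_k$ denotes the commutative ring $B_k=\mathbb{F}_{p^r}[v_1,\dots,v_k]/\langle v_i^2-v_i,\ v_iv_j-v_jv_i : 1\le i,j\le k\rangle$. *)

(* Defs.v *)
From HB Require Import structures.
From mathcomp Require Import all_boot all_order all_algebra all_field.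
From mathcomp Require Import ring_quotient generic_quotient.
From mathcomp Require Import mpoly.
From Stdlib Require Import ClassicalEpsilon.

Set Implicit Arguments.
Unset Strict Implicit.
Unset Printing Implicit Defensive.

Import GRing.Theory.
Local Open Scope ring_scope.

Definition gen_ideal (R : comNzRingType) (n : nat) (a : 'I_n -> R) (x : R) : Prop :=
  exists c : 'I_n -> R, x = \sum_(i < n) c i * a i.

Definition is_ideal (R : comNzRingType) (S : R -> Prop) : Prop :=
  [/\ S 0, (forall x y, S x -> S y -> S (x + y)) & (forall a x, S x -> S (a * x))].

Definition principal_ideal (R : comNzRingType) (S : R -> Prop) : Prop :=
  exists g : R, forall x, S x <-> gen_ideal (fun _ : 'I_1 => g) x.

(* Boolean version (via classical choice) of a Prop, needed because
   MathComp's ring quotients require a decidable ideal predicate. *)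
Definition classical_bool (P : Prop) : bool :=
  if excluded_middle_informative P then true else false.

Lemma classical_boolP (P : Prop) : reflect P (classical_bool P).
Proof.
rewrite /classical_bool; case: excluded_middle_informative => H; by constructor.
Qed.

Section BooleanIdeal.
Variables (F : fieldType) (k : nat).

Definition Bgens (i : 'I_k) : {mpoly F[k]} := 'X_i ^+ 2 - 'X_i.

Definition Bideal : pred {mpoly F[k]} :=
  fun q => classical_bool (gen_ideal Bgens q).

Lemma Bideal_closed : idealr_closed Bideal.
Proof.
split.
- apply/classical_boolP; exists (fun _ => 0).
  by rewrite big1 // => i _; rewrite mul0r.
- apply/negP => /classical_boolP [c Hc].
  have := congr1 (fun q : {mpoly F[k]} => q.@[fun _ : 'I_k => (0 : F)]) Hc.
  rewrite /= meval1 raddf_sum /= big1; first by move/eqP; rewrite oner_eq0.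
  move=> i _; rewrite mevalM /Bgens mevalB expr2 mevalM !mevalXU.
  by rewrite mulr0 subrr mulr0.
- move=> a u v /classical_boolP [cu ->] /classical_boolP [cv ->].
  apply/classical_boolP; exists (fun i => a * cu i + cv i).
  rewrite mulr_sumr -big_split /=; apply: eq_bigr => i _.
  by rewrite mulrDl mulrA.
Qed.

HB.instance Definition _ := isIdealr.Build {mpoly F[k]} Bideal Bideal_closed.

(* B_k = F[v_1, ..., v_k] / < v_i^2 - v_i, v_i v_j - v_j v_i >.
   (The commutation relations hold automatically in the commutative
   polynomial ring.) *)
Definition Bk : comNzRingType := {ideal_quot (Idealr.clone _ Bideal _)}.

End BooleanIdeal.

Definition prop26_gen (R : comNzRingType) (q m : nat) (alpha : 'I_m -> R) : R :=
  \sum_(A : {set 'I_m} | A != set0)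
     (-1) ^+ (#|A| + 1) * (\prod_(j in A) alpha j) ^+ (q - 1).

(* Main.v *)
Require Import Defs.
From HB Require Import structures.
From mathcomp Require Import all_boot all_order all_algebra all_field.
From mathcomp Require Import ring_quotient generic_quotient.
From mathcomp Require Import mpoly.
From mathcomp Require Import zify.
Set Implicit Arguments. Unset Strict Implicit. Unset Printing Implicit Defensive.
Import GRing.Theory.
Local Open Scope ring_scope. Local Open Scope quotient_scope.

Section GenIdeal.
Variables (R : comNzRingType) (n : nat) (a : 'I_n -> R).

Lemma gi0 : gen_ideal a 0.
Proof. by exists (fun _ => 0); rewrite big1 // => i _; rewrite mul0r. Qed.

Lemma giD x y : gen_ideal a x -> gen_ideal a y -> gen_ideal a (x + y).
Proof.
move=> [cx ->] [cy ->]; exists (fun i => cx i + cy i).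
by rewrite -big_split /=; apply: eq_bigr => i _; rewrite mulrDl.
Qed.

Lemma giM b x : gen_ideal a x -> gen_ideal a (b * x).
Proof.
move=> [cx ->]; exists (fun i => b * cx i).
by rewrite mulr_sumr; apply: eq_bigr => i _; rewrite mulrA.
Qed.

Lemma gi_gen i : gen_ideal a (a i).
Proof.
exists (fun j => if j == i then 1 else 0).
rewrite (bigD1 i) //= eqxx mul1r big1 ?addr0 // => j /negbTE ->.
by rewrite mul0r.
Qed.
End GenIdeal.

Section Generic.
Variables (R : comNzRingType) (q : nat).
Hypothesis hq : (2 <= q)%N.
Hypothesis hfrob : forall x : R, x ^+ q = x.

Lemma alpha_e (a : R) : a * a ^+ (q - 1) = a.
Proof. by rewrite -exprS subn1 prednK ?hfrob //; apply: leq_trans hq. Qed.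

Lemma gen_expand m (alpha : 'I_m -> R) :
  prop26_gen q alpha = 1 - \prod_(j < m) (1 - alpha j ^+ (q - 1)).
Proof.
have -> : \prod_(j < m) (1 - alpha j ^+ (q - 1)) =
   \prod_(j < m) (- alpha j ^+ (q - 1) + 1).
  by apply: eq_bigr => j _; rewrite addrC.
rewrite bigA_distr (bigD1 set0) //=.
rewrite big1; last by move=> i _; rewrite inE.
rewrite opprD addrA subrr add0r /prop26_gen -sumrN.
apply: eq_bigr => A _.
rewrite -big_mkcond /= prodrN prodrXl exprD expr1 mulrN1.
by rewrite mulNr.
Qed.

Lemma part1 m (alpha : 'I_m -> R) x :
  gen_ideal alpha x <-> gen_ideal (fun _ : 'I_1 => prop26_gen q alpha) x.
Proof.
split.
- have key : forall j, alpha j * prop26_gen q alpha = alpha j.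
    move=> j; rewrite gen_expand mulrBr mulr1 (bigD1 j) //= mulrA.
    by rewrite mulrBr mulr1 alpha_e subrr mul0r subr0.
  move=> [c ->]; exists (fun _ => \sum_(i < m) c i * alpha i).
  rewrite big_ord1 mulr_suml; apply: eq_bigr => i _.
  by rewrite -mulrA key.
- move=> [c ->]; rewrite big_ord1; apply: giM.
  rewrite /prop26_gen; apply: big_ind => //.
  + exact: gi0.
  + exact: giD.
  move=> A /set0Pn [j jA]; apply: giM.
  rewrite (bigD1 j) //= exprMn mulrC.
  have -> : alpha j ^+ (q - 1) = alpha j ^+ (q - 2) * alpha j.
    by rewrite -exprSr; congr (_ ^+ _); move: hq; clear; lia.
  by rewrite mulrA; apply: giM; apply: gi_gen.
Qed.

Lemma part2 (T : finType) (phi : T -> R) (phi_surj : forall x, exists t, x = phi t)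
  (S : R -> Prop) : is_ideal S -> principal_ideal S.
Proof.
move=> [S0 SD SM].
pose s := 0 :: [seq phi t | t <- enum T & classical_bool (S (phi t))].
pose alpha := fun i : 'I_(size s) => nth 0 s i.
have Ss : forall y, y \in s -> S y.
  move=> y; rewrite inE => /orP [/eqP -> //|/mapP [t]].
  by rewrite mem_filter => /andP [/classical_boolP St _] ->.
exists (prop26_gen q alpha) => x.
rewrite -part1; split.
- move=> Sx; have [t xt] := phi_surj x.
  have xs : x \in s.
    rewrite inE; apply/orP; right; apply/mapP; exists t => //.
    by rewrite mem_filter mem_enum andbT; apply/classical_boolP; rewrite -xt.
  have := gi_gen alpha (Ordinal (etrans (index_mem x s) xs)).
  by rewrite /alpha /= nth_index.
- move=> [c ->]; apply: big_ind => // i _; apply: SM; apply: Ss.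
  exact: mem_nth.
Qed.
End Generic.

Section Bspec.
Variables (F : finFieldType) (k : nat).
Local Notation BQ := {ideal_quot (Idealr.clone _ (@Bideal F k) _)}.
Local Notation pi := (\pi_BQ : {mpoly F[k]} -> BQ).

Lemma pi_surj (x : BQ) : exists p, x = pi p.
Proof. by exists (repr x); rewrite reprK. Qed.

Lemma BQ_ind (P : BQ -> Prop) : P 0 -> (forall x y, P x -> P y -> P (x + y)) ->
  (forall c m, P (pi (c *: 'X_[m]))) -> forall x, P x.
Proof.
move=> P0 PD PM x; have [p ->] := pi_surj x.
elim/mpolyind: p => [|c m p _ _ IH]; first by rewrite rmorph0.
by rewrite rmorphD; apply: PD => //; apply: PM.
Qed.

Lemma piX_idem (i : 'I_k) : pi 'X_i * pi 'X_i = pi 'X_i.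
Proof.
rewrite -rmorphM; apply/eqP; rewrite -Quotient.idealrBE.
apply/classical_boolP; exists (fun j => if j == i then 1 else 0).
rewrite (bigD1 i) //= eqxx mul1r big1 ?addr0 ?expr2 // => j /negbTE ->.
by rewrite mul0r.
Qed.

Lemma idem_pow (R : comNzRingType) (y : R) n : y * y = y -> y ^+ n.+1 = y.
Proof. by move=> yy; elim: n => // n IH; rewrite exprS IH. Qed.

Lemma pi_mono c m : pi (c *: 'X_[m]) =
  pi c%:MP * \prod_(i < k) (if (m i != 0)%N then pi 'X_i else 1).
Proof.
rewrite -mul_mpolyC rmorphM mpolyXE_id rmorph_prod; congr (_ * _).
apply: eq_bigr => i _; rewrite rmorphXn; case: (m i) => [|n] //=.
by rewrite idem_pow // piX_idem.
Qed.

Lemma prod_idem (I : finType) (P : pred I) (f : I -> BQ) :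
  (forall i, f i * f i = f i) -> (\prod_(i | P i) f i) * (\prod_(i | P i) f i) = \prod_(i | P i) f i.
Proof.
move=> H; apply: (big_ind (fun y : BQ => y * y = y)) => //; first by rewrite mulr1.
by move=> a b ha hb; rewrite mulrACA ha hb.
Qed.

Lemma BQ_frob p r : prime p -> #|F| = (p ^ r)%N -> forall x : BQ, x ^+ #|F| = x.
Proof.
move=> hp hF.
have chF : p \in [pchar F] by exact: card_finPcharP hF hp.
have chB : p \in [pchar BQ].
  apply/andP; split => //.
  have h : (p%:R : F) = 0 by apply/eqP; rewrite pcharf0.
  by apply/eqP; rewrite -(rmorph_nat pi) -(rmorph_nat (@mpolyC k F)) h !rmorph0.
have hn : [pchar BQ].-nat #|F| by rewrite hF pnatX (pnatE _ hp) chB.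
have : (0 < #|F|)%N by apply/card_gt0P; exists 0.
case hc: #|F| => [//|n] _; rewrite -hc.
apply: BQ_ind => [|x y hx hy|c m].
- by rewrite hc expr0n.
- by rewrite exprDn_pchar // hx hy.
rewrite pi_mono exprMn -rmorphXn -rmorphXn expf_card; congr (_ * _).
rewrite hc; apply: idem_pow; apply: prod_idem => i; case: ifP => _; by rewrite ?mulr1 ?piX_idem.
Qed.

Definition Phi (f : {ffun {set 'I_k} -> F}) : BQ :=
  \sum_(A : {set 'I_k}) pi (f A)%:MP * \prod_(i in A) pi 'X_i.

Lemma Phi_surj (x : BQ) : exists f, x = Phi f.
Proof.
elim/BQ_ind: x => [|x y [f1 ->] [f2 ->]|c m].
- exists [ffun _ => 0]; rewrite /Phi big1 // => A _.
  by rewrite ffunE !rmorph0 mul0r.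
- exists [ffun A => f1 A + f2 A]; rewrite /Phi -big_split /=.
  by apply: eq_bigr => A _; rewrite ffunE !rmorphD mulrDl.
- exists [ffun A => if A == [set i | m i != 0%N] then c else 0].
  rewrite /Phi (bigD1 [set i | m i != 0%N]) //= ffunE eqxx [X in _ + X]big1 ?addr0.
    rewrite pi_mono; congr (_ * _); rewrite [RHS]big_mkcond /=.
    by apply: eq_bigr => i _; rewrite inE.
  by move=> A /negbTE hA; rewrite ffunE hA !rmorph0 mul0r.
Qed.
End Bspec.

Theorem proposition2p6 (F : finFieldType) (p r k : nat)
    (hp : prime p) (hr : (1 <= r)%N) (hF : #|F| = (p ^ r)%N) (hk : (1 <= k)%N) :
  (forall (m : nat) (alpha : 'I_m -> Bk F k), (1 <= m)%N ->
     forall x : Bk F k,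
       gen_ideal alpha x <->
       gen_ideal (fun _ : 'I_1 => prop26_gen (p ^ r) alpha) x)
  /\ (forall S : Bk F k -> Prop, is_ideal S -> principal_ideal S).
Proof.
have hq : (2 <= p ^ r)%N.
  have h2 := prime_gt1 hp; have h0 := expn_gt0 p (r.-1).
  case: r hr hF {h0} (expn_gt0 p r.-1) => [//|r'] _ _ /= h0.
  rewrite expnS; nia.
have hfrob : forall x : Bk F k, x ^+ (p ^ r) = x.
  by move=> x; rewrite -hF; exact: (BQ_frob hp hF).
split.
- by move=> m alpha _ x; exact: (part1 hq hfrob).
- move=> S hS; exact: (part2 hq hfrob (@Phi_surj F k) hS).
Qed.
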